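(* Let $W$ be a representation $\sigma\mapsto A_\sigma$ of a semigroup $\Sigma$ and let $\Gamma:W\times\mathbb{R}^p\to W$ be smooth with $\Gamma(A_\sigma X;\lambda)=A_\sigma\Gamma(X;\lambda)$ for all $\sigma\in\Sigma$, $X$, $\lambda$. Let $X_0\in W$, $\lambda_0\in\mathbb{R}^p$ with $\Gamma(X_0;\lambda_0)=0$ and $A_\sigma X_0=X_0$ for all $\sigma\in\Sigma$. Let $L_0=D_X\Gamma(X_0;\lambda_0)$ with semisimple part $L_0^S$. Then $\ker L_0^S$ and $\mathrm{im}\,L_0^S$ are subrepresentations, and the reduced map $r:\ker L_0^S\times\Lambda\to\ker L_0^S$ (constructed as in the context) is $\Sigma$-equivariant: $r(A_\sigma X_{\ker};\lambda)=A_\sigma r(X_{\ker};\lambda)$ for all $\sigma\in\Sigma$ and all $(X_{\ker},\lambda)$ sufficiently close to $((X_0)_{\ker},\lambda_0)$, where $A_\sigma$ denotes the restriction to $\ker L_0^S$.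
   Context: A representation of a semigroup $\Sigma$ in a finite-dimensional real vector space $W$ is a map $\sigma\mapsto A_\sigma\in\mathfrak{gl}(W)$ with $A_\sigma A_\tau=A_{\sigma\tau}$; a subrepresentation is a subspace invariant under all $A_\sigma$. For a linear $L_0$, $L_0=L_0^S+L_0^N$ is its decomposition into commuting semisimple and nilpotent parts; $W=\mathrm{im}\,L_0^S\oplus\ker L_0^S$ with projections $P_{\mathrm{im}},P_{\ker}$, and write $X=X_{\mathrm{im}}+X_{\ker}$. Set $\Gamma_{\mathrm{im}}=P_{\mathrm{im}}\circ\Gamma$, $\Gamma_{\ker}=P_{\ker}\circ\Gamma$. Since $D_{X_{\mathrm{im}}}\Gamma_{\mathrm{im}}(X_0;\lambda_0)$ is invertible on $\mathrm{im}\,L_0^S$, the implicit function theorem gives a smooth $X_{\mathrm{im}}(X_{\ker},\lambda)$, defined for $X_{\ker}$ near $(X_0)_{\ker}$ and $\lambda$ in a neighbourhood $\Lambda$ of $\lambda_0$, which is the unique solution near $(X_0)_{\mathrm{im}}$ of $\Gamma_{\mathrm{im}}(X_{\mathrm{im}}+X_{\ker};\lambda)=0$. The reduced map is $r(X_{\ker};\lambda)=\Gamma_{\ker}(X_{\mathrm{im}}(X_{\ker},\lambda)+X_{\ker};\lambda)$. *)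

(* Defs.v *)
From Stdlib Require Import Reals Lra Lia Arith.
Open Scope R_scope.

(* Vectors of R^n are modelled as functions nat -> R supported on {0,..,n-1};
   linear maps of R^n as matrices nat -> nat -> R acting through [mat_vec]
   (only entries with indices < n matter). *)

Definition vec (n : nat) (x : nat -> R) : Prop :=
  forall i, (n <= i)%nat -> x i = 0.

Definition vzero : nat -> R := fun _ => 0.
Definition vadd (x y : nat -> R) : nat -> R := fun i => x i + y i.
Definition vsub (x y : nat -> R) : nat -> R := fun i => x i - y i.
Definition vscale (a : R) (x : nat -> R) : nat -> R := fun i => a * x i.

Fixpoint rsum (k : nat) (f : nat -> R) : R :=
  match k with O => 0 | S k => rsum k f + f k end.

Fixpoint vnorm (n : nat) (x : nat -> R) : R :=
  match n with O => 0 | S m => Rmax (vnorm m x) (Rabs (x m)) end.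

Definition mat_vec (n : nat) (M : nat -> nat -> R) (x : nat -> R) : nat -> R :=
  fun i => if Nat.ltb i n then rsum n (fun k => M i k * x k) else 0.

Definition upd (x : nat -> R) (j : nat) (t : R) : nat -> R :=
  fun i => if Nat.eqb i j then t else x i.

(* splitting R^(n+p) into R^n x R^p *)
Definition vtake (n : nat) (z : nat -> R) : nat -> R :=
  fun i => if Nat.ltb i n then z i else 0.
Definition vdrop (n : nat) (z : nat -> R) : nat -> R := fun i => z (n + i)%nat.

Definition cont_on (m : nat) (f : (nat -> R) -> R) : Prop :=
  forall x, vec m x -> forall eps, 0 < eps -> exists delta, 0 < delta /\
    forall y, vec m y -> vnorm m (vsub y x) < delta -> Rabs (f y - f x) < eps.

Fixpoint Ck (m k : nat) (f : (nat -> R) -> R) : Prop :=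
  match k with
  | O => cont_on m f
  | S k' => cont_on m f /\
      forall j, (j < m)%nat -> exists g : (nat -> R) -> R,
        (forall x, vec m x -> derivable_pt_lim (fun t => f (upd x j t)) (x j) (g x))
        /\ Ck m k' g
  end.

Definition smooth (m : nat) (f : (nat -> R) -> R) : Prop := forall k, Ck m k f.

Definition subspace (n : nat) (U : (nat -> R) -> Prop) : Prop :=
  (forall x, U x -> vec n x) /\ U vzero /\
  (forall x y, U x -> U y -> U (vadd x y)) /\
  (forall a x, U x -> U (vscale a x)).

Definition invariant (n : nat) (M : nat -> nat -> R) (U : (nat -> R) -> Prop) : Prop :=
  forall x, U x -> U (mat_vec n M x).

Definition semisimple (n : nat) (M : nat -> nat -> R) : Prop :=
  forall U, subspace n U -> invariant n M U ->
    exists V, subspace n V /\ invariant n M V /\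
      (forall x, U x -> V x -> x = vzero) /\
      (forall x, vec n x -> exists u v, U u /\ V v /\ x = vadd u v).

Definition nilpotent (n : nat) (M : nat -> nat -> R) : Prop :=
  exists k, forall x, vec n x -> Nat.iter k (mat_vec n M) x = vzero.

Definition commute (n : nat) (M M' : nat -> nat -> R) : Prop :=
  forall x, vec n x -> mat_vec n M (mat_vec n M' x) = mat_vec n M' (mat_vec n M x).

Definition ker_op (n : nat) (M : nat -> nat -> R) (x : nat -> R) : Prop :=
  vec n x /\ mat_vec n M x = vzero.

Definition im_op (n : nat) (M : nat -> nat -> R) (y : nat -> R) : Prop :=
  exists x, vec n x /\ y = mat_vec n M x.

(* Xim is the implicit-function-theorem solution X_im(X_ker, lambda):
   defined on {X_ker in ker L0^S, |X_ker - (X0)_ker| < d1} x {|lambda - lambda0| < d1},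
   continuous there, and the unique solution of Gamma_im(X_im + X_ker; lambda) = 0
   in im L0^S within distance d2 of (X0)_im. *)
Definition implicit_solution (n p : nat)
    (Gamma : (nat -> R) -> (nat -> R) -> (nat -> R))
    (LS : nat -> nat -> R) (Pim Pker : (nat -> R) -> (nat -> R))
    (X0 lam0 : nat -> R) (Xim : (nat -> R) -> (nat -> R) -> (nat -> R))
    (d1 d2 : R) : Prop :=
  0 < d1 /\ 0 < d2 /\
  (forall Xk l, ker_op n LS Xk -> vec p l ->
     vnorm n (vsub Xk (Pker X0)) < d1 -> vnorm p (vsub l lam0) < d1 ->
     im_op n LS (Xim Xk l) /\
     vnorm n (vsub (Xim Xk l) (Pim X0)) < d2 /\
     Pim (Gamma (vadd (Xim Xk l) Xk) l) = vzero /\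
     (forall Y, im_op n LS Y -> vnorm n (vsub Y (Pim X0)) < d2 ->
        Pim (Gamma (vadd Y Xk) l) = vzero -> Y = Xim Xk l)) /\
  (forall Xk l, ker_op n LS Xk -> vec p l ->
     vnorm n (vsub Xk (Pker X0)) < d1 -> vnorm p (vsub l lam0) < d1 ->
     forall eps, 0 < eps -> exists delta, 0 < delta /\
       forall Xk' l', ker_op n LS Xk' -> vec p l' ->
         vnorm n (vsub Xk' (Pker X0)) < d1 -> vnorm p (vsub l' lam0) < d1 ->
         vnorm n (vsub Xk' Xk) < delta -> vnorm p (vsub l' l) < delta ->
         vnorm n (vsub (Xim Xk' l') (Xim Xk l)) < eps).

Definition reduced_map (Gamma : (nat -> R) -> (nat -> R) -> (nat -> R))
    (Pker : (nat -> R) -> (nat -> R)) (Xim : (nat -> R) -> (nat -> R) -> (nat -> R))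
    (Xk l : nat -> R) : nat -> R :=
  Pker (Gamma (vadd (Xim Xk l) Xk) l).

(* Main.v *)
Require Import Defs.
From Stdlib Require Import Reals Lra Lia.
From Stdlib Require Import FunctionalExtensionality IndefiniteDescription.
Open Scope R_scope.

Module MC.
From mathcomp Require Import all_boot all_algebra.
From mathcomp Require Import Rstruct zify.
Import GRing.Theory.
Local Open Scope ring_scope.
Lemma mx_surj (n:nat) (S P : 'M[R]_n) :
  (forall u : 'rV_n, (u *m S == 0) = (u *m P == 0)) ->
  (forall u : 'rV_n, exists w : 'rV_n, u *m P = w *m S) ->
  forall u : 'rV_n, exists w : 'rV_n, u *m S = w *m P.
Proof.
move=> hk hi.
have PS : (P <= S)%MS.
  apply/row_subP => i; have [w hw] := hi (row i 1%:M).
  have -> : row i P = row i 1%:M *m P by rewrite -row_mul mul1mx.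
  by rewrite hw submxMl.
have kk : (kermx S == kermx P)%MS.
  apply/andP; split; apply/row_subP => i; apply/sub_kermxP.
    by apply/eqP; rewrite -hk; apply/eqP/sub_kermxP/row_sub.
  by apply/eqP; rewrite hk; apply/eqP/sub_kermxP/row_sub.
have rk : \rank S = \rank P.
  have := mxrank_ker S; have := mxrank_ker P.
  rewrite (eqmx_rank kk) => -> e.
  have h1 := rank_leq_col S; have h2 := rank_leq_col P.
  lia.
have SP : (S <= P)%MS by rewrite -(mxrank_leqif_sup PS) rk.
move=> u; apply/submxP; exact: submx_trans (submxMl u S) SP.
Qed.
Definition rv (n : nat) (x : nat -> R) : 'rV[R]_n := \row_(j < n) x j.
Definition unrv (n : nat) (r : 'rV[R]_n) : nat -> R :=
  fun i => match @insub _ (fun k => (k < n)%N) 'I_n i with Some j => r 0 j | None => 0%R end.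
Arguments unrv {n}.
Definition mxof (n : nat) (M : nat -> nat -> R) : 'M[R]_n := \matrix_(i < n, j < n) M j i.

Lemma rsum_big n (f : nat -> R) : rsum n f = \sum_(k < n) f k.
Proof. elim: n => [|n IH] /=; first by rewrite big_ord0.
by rewrite big_ord_recr /= IH. Qed.

Lemma unrv_vec {n} (r : 'rV[R]_n) : vec n (unrv r).
Proof. move=> i /leP hi; rewrite /unrv insubN //; rewrite -leqNgt; exact: hi. Qed.

Lemma unrvK {n x} : vec n x -> unrv (rv n x) = x.
Proof. move=> hx; apply: functional_extensionality => i; rewrite /unrv.
case: insubP => [j hj <-|]; first by rewrite mxE.
by rewrite -leqNgt => /leP h; rewrite hx. Qed.

Lemma rvK {n} (r : 'rV[R]_n) : rv n (unrv r) = r.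
Proof. apply/rowP => j; rewrite mxE /unrv insubT //= => h.
by congr (r 0 _); apply: val_inj. Qed.

Lemma rv_mat n M x : rv n (mat_vec n M x) = rv n x *m mxof n M.
Proof. apply/rowP => j; rewrite !mxE /mat_vec.
have : (Nat.ltb j n = true) by apply/PeanoNat.Nat.ltb_lt/ltP.
move=> ->; rewrite rsum_big; apply: eq_bigr => k _; rewrite !mxE mulrC //. Qed.

Lemma rv_zero n : rv n vzero = 0.
Proof. by apply/rowP => j; rewrite !mxE. Qed.

Lemma mat_vec_vec n M x : vec n (mat_vec n M x).
Proof. move=> i hi; rewrite /mat_vec; have: Nat.ltb i n = false.
  by apply/PeanoNat.Nat.ltb_ge. by move=> ->. Qed.

Lemma rv_inj n x y : vec n x -> vec n y -> rv n x = rv n y -> x = y.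
Proof. by move=> hx hy e; rewrite -(unrvK hx) -(unrvK hy) e. Qed.

Lemma rv_iter n L k x : rv n (Nat.iter k (mat_vec n L) x) = rv n x *m (mxof n L) ^+ k.
Proof. elim: k => [|k IH] /=; first by rewrite expr0 mulmx1.
by rewrite rv_mat IH exprSr mulmxA. Qed.

Lemma iter_vec n L k x : vec n x -> vec n (Nat.iter k (mat_vec n L) x).
Proof. case: k => [|k] //= _; exact: mat_vec_vec. Qed.

Lemma iter_surj n (S L : nat->nat->R) k :
  (forall x, vec n x -> (mat_vec n S x = vzero <-> Nat.iter k (mat_vec n L) x = vzero)) ->
  (forall x, vec n x -> exists w, vec n w /\ Nat.iter k (mat_vec n L) x = mat_vec n S w) ->
  forall x, vec n x -> exists w, vec n w /\ mat_vec n S x = Nat.iter k (mat_vec n L) w.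
Proof.
move=> hk hi x hx.
have vz : vec n vzero by [].
have A1 : forall u : 'rV_n, (u *m mxof n S == 0) = (u *m (mxof n L ^+ k) == 0).
  suff H : forall y, vec n y -> (rv n y *m mxof n S == 0) = (rv n y *m (mxof n L ^+ k) == 0).
    by move=> u; rewrite -(rvK u); apply: H; exact: unrv_vec.
  move=> y hy; have := hk _ hy; rewrite -rv_mat -rv_iter.
  case=> h1 h2; apply/eqP/eqP.
    move=> e; rewrite -rv_zero; congr rv; apply: h1; apply: rv_inj => //.
      exact: mat_vec_vec. by rewrite e rv_zero.
  move=> e; rewrite -rv_zero; congr rv; apply: h2; apply: rv_inj => //.
    exact: iter_vec. by rewrite e rv_zero.
have A2 : forall u : 'rV_n, exists w : 'rV_n, u *m (mxof n L ^+ k) = w *m mxof n S.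
  move=> u; have [w [hw e]] := hi _ (unrv_vec u); exists (rv n w).
  by rewrite -(rvK u) -rv_iter e rv_mat.
have [w hw] := @mx_surj n _ _ A1 A2 (rv n x).
exists (unrv w); split; first exact: unrv_vec.
apply: (@rv_inj n); [exact: mat_vec_vec| apply: iter_vec; exact: unrv_vec|].
by rewrite rv_mat rv_iter rvK.
Qed.
End MC.

Lemma rsum_ext m f g : (forall k, (k < m)%nat -> f k = g k) -> rsum m f = rsum m g.
Proof. induction m; intros H; simpl; auto. rewrite IHm by (intros; apply H; lia). rewrite H by lia; auto. Qed.

Lemma rsum_plus m f g : rsum m (fun k => f k + g k) = rsum m f + rsum m g.
Proof. induction m; simpl; try rewrite IHm; ring. Qed.
Lemma rsum_minus m f g : rsum m (fun k => f k - g k) = rsum m f - rsum m g.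
Proof. induction m; simpl; try rewrite IHm; ring. Qed.
Lemma rsum_scal m c f : rsum m (fun k => c * f k) = c * rsum m f.
Proof. induction m; simpl; try rewrite IHm; ring. Qed.
Lemma rsum_zero m f : (forall k, (k < m)%nat -> f k = 0) -> rsum m f = 0.
Proof. intros H; rewrite (rsum_ext m f (fun _ => 0)) by auto. clear H. induction m; simpl; try rewrite IHm; ring. Qed.
Lemma rsum_swap m n F : rsum m (fun i => rsum n (fun k => F i k)) = rsum n (fun k => rsum m (fun i => F i k)).
Proof. induction m; simpl. rewrite rsum_zero; auto. rewrite IHm, <- rsum_plus; auto. Qed.
Lemma rsum_upd m F x j t : (j < m)%nat ->
  rsum m (fun k => F k * upd x j t k) = rsum m (fun k => F k * x k) + F j * (t - x j).
Proof. induction m; intros Hj; [lia|]. simpl. unfold upd at 2.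
destruct (Nat.eq_dec j m).
- subst. rewrite Nat.eqb_refl. rewrite (rsum_ext m _ (fun k => F k * x k)). ring.
  intros k Hk; unfold upd; destruct (Nat.eqb_spec k m); [lia|auto].
- destruct (Nat.eqb_spec m j); [lia|]. rewrite IHm by lia. ring.
Qed.
Lemma rsum_trunc m n f : (n <= m)%nat -> (forall k, (n <= k)%nat -> f k = 0) -> rsum m f = rsum n f.
Proof. induction m; intros H1 H2. replace n with 0%nat by lia; auto.
destruct (Nat.eq_dec n (S m)). subst; auto. simpl. rewrite IHm by (auto; lia). rewrite H2 by lia. ring. Qed.

Ltac ltcase i n := unfold mat_vec, vadd, vsub, vscale, vzero; destruct (Nat.ltb i n).

Lemma mv_add n M x y : mat_vec n M (vadd x y) = vadd (mat_vec n M x) (mat_vec n M y).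
Proof. apply functional_extensionality; intro i. ltcase i n; [|ring].
rewrite <- rsum_plus; apply rsum_ext; intros; ring. Qed.
Lemma mv_sub n M x y : mat_vec n M (vsub x y) = vsub (mat_vec n M x) (mat_vec n M y).
Proof. apply functional_extensionality; intro i. ltcase i n; [|ring].
rewrite <- rsum_minus; apply rsum_ext; intros; ring. Qed.
Lemma mv_scale n M a x : mat_vec n M (vscale a x) = vscale a (mat_vec n M x).
Proof. apply functional_extensionality; intro i. ltcase i n; [|ring].
rewrite <- rsum_scal; apply rsum_ext; intros; ring. Qed.
Lemma mv_zero n M : mat_vec n M vzero = vzero.
Proof. apply functional_extensionality; intro i. ltcase i n; auto.
apply rsum_zero; intros; ring. Qed.
Lemma mv_vec n M x : vec n (mat_vec n M x).
Proof. intros i hi; unfold mat_vec. destruct (Nat.ltb_spec i n); [lia|auto]. Qed.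
Lemma iter_vec n M k x : vec n x -> vec n (Nat.iter k (mat_vec n M) x).
Proof. destruct k; simpl; auto. intros; apply mv_vec. Qed.

Definition matmul n (M N : nat -> nat -> R) i k := rsum n (fun j => M i j * N j k).
Lemma mv_mul n M N x : mat_vec n M (mat_vec n N x) = mat_vec n (matmul n M N) x.
Proof. apply functional_extensionality; intro i. unfold mat_vec at 1 3. destruct (Nat.ltb i n); auto.
unfold matmul. rewrite (rsum_ext n _ (fun j => rsum n (fun k => M i j * N j k * x k))).
rewrite rsum_swap. apply rsum_ext; intros k _. rewrite (Rmult_comm _ (x k)), <- rsum_scal.
apply rsum_ext; intros; ring.
intros j Hj; unfold mat_vec. destruct (Nat.ltb_spec j n); [|lia].
rewrite <- rsum_scal; apply rsum_ext; intros; ring. Qed.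

Lemma mv_ext n M N x : (forall i j, (i < n)%nat -> (j < n)%nat -> M i j = N i j) -> mat_vec n M x = mat_vec n N x.
Proof. intros H; apply functional_extensionality; intro i; unfold mat_vec.
destruct (Nat.ltb_spec i n); auto. apply rsum_ext; intros; rewrite H; auto. Qed.

Lemma mv_sum n M N P x : (forall i j, (i < n)%nat -> (j < n)%nat -> M i j = N i j + P i j) ->
  mat_vec n M x = vadd (mat_vec n N x) (mat_vec n P x).
Proof. intros H; apply functional_extensionality; intro i; unfold mat_vec, vadd.
destruct (Nat.ltb_spec i n); [|ring]. rewrite <- rsum_plus. apply rsum_ext; intros; rewrite H; auto; ring. Qed.

Lemma iter_add n M k x y : Nat.iter k (mat_vec n M) (vadd x y) = vadd (Nat.iter k (mat_vec n M) x) (Nat.iter k (mat_vec n M) y).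
Proof. induction k; simpl; auto. rewrite IHk, mv_add; auto. Qed.
Lemma iter_sub n M k x y : Nat.iter k (mat_vec n M) (vsub x y) = vsub (Nat.iter k (mat_vec n M) x) (Nat.iter k (mat_vec n M) y).
Proof. induction k; simpl; auto. rewrite IHk, mv_sub; auto. Qed.
Lemma iter_zero n M k : Nat.iter k (mat_vec n M) vzero = vzero.
Proof. induction k; simpl; auto. rewrite IHk, mv_zero; auto. Qed.
Lemma iter_comm n M N k x : vec n x -> commute n M N ->
  Nat.iter k (mat_vec n M) (mat_vec n N x) = mat_vec n N (Nat.iter k (mat_vec n M) x).
Proof. intros hx hc; induction k; simpl; auto. rewrite IHk. apply hc. apply iter_vec; auto. Qed.
Lemma iter_succ_r' (f : (nat -> R) -> nat -> R) k x : Nat.iter (S k) f x = Nat.iter k f (f x).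
Proof. apply Nat.iter_succ_r. Qed.

Section LA.
Variables (n : nat) (L0 LS LN : nat -> nat -> R).
Hypothesis hsum : forall i j, (i < n)%nat -> (j < n)%nat -> L0 i j = LS i j + LN i j.
Hypothesis hss : semisimple n LS.
Hypothesis hcom : commute n LS LN.

Lemma L0_eq x : mat_vec n L0 x = vadd (mat_vec n LS x) (mat_vec n LN x).
Proof. apply mv_sum; auto. Qed.

Lemma LS_eq x : mat_vec n LS x = vsub (mat_vec n L0 x) (mat_vec n LN x).
Proof. rewrite L0_eq. apply functional_extensionality; intro i; unfold vsub, vadd; ring. Qed.

Lemma com_L0_LN : commute n L0 LN.
Proof. intros x hx. rewrite !L0_eq, mv_add, hcom; auto. Qed.
Lemma com_L0_LS : commute n L0 LS.
Proof. intros x hx. rewrite !L0_eq, mv_add, hcom; auto. Qed.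

Lemma ker_subspace : subspace n (ker_op n LS).
Proof. split; [|split; [|split]].
- intros x [h _]; auto.
- split. intros i _; reflexivity. apply mv_zero.
- intros x y [h1 h2] [h3 h4]. split. intros i hi; unfold vadd; rewrite h1, h3; auto; ring.
  rewrite mv_add, h2, h4; apply functional_extensionality; intro; unfold vadd, vzero; ring.
- intros a x [h1 h2]. split. intros i hi; unfold vscale; rewrite h1; auto; ring.
  rewrite mv_scale, h2; apply functional_extensionality; intro; unfold vscale, vzero; ring.
Qed.
Lemma ker_inv : invariant n LS (ker_op n LS).
Proof. intros x [h1 h2]; split. apply mv_vec. rewrite h2; apply mv_zero. Qed.

Lemma iterS_ker m x : vec n x -> Nat.iter m (mat_vec n LS) x = vzero -> mat_vec n LS x = vzero.
Proof.
intros hx hm. destruct (hss _ ker_subspace ker_inv) as [V [hV [hVi [hd hc]]]].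
destruct (hc x hx) as [u [v [hu [hv ->]]]].
assert (Hv : forall m v, V v -> Nat.iter m (mat_vec n LS) v = vzero -> v = vzero).
{ clear - hVi hd hV. induction m; intros v hv e; simpl in e; auto.
  change (mat_vec n LS (Nat.iter m (mat_vec n LS) v)) with (Nat.iter (S m) (mat_vec n LS) v) in e.
  rewrite Nat.iter_succ_r in e.
  assert (e2 := IHm _ (hVi _ hv) e). apply hd; auto. split; auto. apply hV; auto. }
assert (E1 : mat_vec n LS (vadd u v) = mat_vec n LS v).
{ rewrite mv_add. destruct hu as [_ hu]; rewrite hu.
  apply functional_extensionality; intro; unfold vadd, vzero; ring. }
rewrite E1. apply (Hv m). apply hVi; auto.
rewrite <- E1, <- Nat.iter_succ_r. simpl. rewrite hm. apply mv_zero.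
Qed.

Lemma ker_L0_LS i j x : vec n x -> Nat.iter i (mat_vec n L0) x = vzero -> Nat.iter j (mat_vec n LN) x = vzero ->
  Nat.iter (i + j) (mat_vec n LS) x = vzero.
Proof.
remember (i + j)%nat as s. revert i j x Heqs. induction s; intros i j x Hs hx h1 h2.
- destruct i; [|lia]. simpl in h1. subst x. simpl. reflexivity.
- destruct i as [|i]. { simpl in h1. subst x. apply iter_zero. }
  destruct j as [|j]. { simpl in h2. subst x. apply iter_zero. }
  rewrite Nat.iter_succ_r, LS_eq, iter_sub.
  rewrite (IHs i (S j)), (IHs (S i) j); try lia; try apply mv_vec.
  + apply functional_extensionality; intro; unfold vsub, vzero; ring.
  + rewrite iter_comm; auto. rewrite h1; apply mv_zero. apply com_L0_LN.
  + rewrite <- Nat.iter_succ_r; auto.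
  + rewrite <- Nat.iter_succ_r; auto.
  + rewrite iter_comm; auto. rewrite h2; apply mv_zero. intros y hy; symmetry; apply com_L0_LN; auto.
Qed.

Lemma ker_iter_L0 k x : ker_op n LS x -> Nat.iter k (mat_vec n L0) x = Nat.iter k (mat_vec n LN) x.
Proof. intros hx. induction k; simpl; auto. rewrite IHk, L0_eq.
assert (ker_op n LS (Nat.iter k (mat_vec n LN) x)).
{ clear IHk. induction k; simpl; auto. destruct IHk as [a b]; split. apply mv_vec.
  rewrite hcom; auto. rewrite b; apply mv_zero. }
destruct H as [_ H]; rewrite H. apply functional_extensionality; intro; unfold vadd, vzero; ring. Qed.

Variable k : nat.
Hypothesis hnil : forall x, vec n x -> Nat.iter k (mat_vec n LN) x = vzero.

Lemma ker_char x : vec n x -> (mat_vec n LS x = vzero <-> Nat.iter k (mat_vec n L0) x = vzero).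
Proof. intros hx; split; intros h.
- rewrite ker_iter_L0. apply hnil; auto. split; auto.
- apply (iterS_ker (k + k)); auto. apply ker_L0_LS; auto.
Qed.

Variables (Pim Pker : (nat -> R) -> (nat -> R)).
Hypothesis hproj : forall x, vec n x ->
     im_op n LS (Pim x) /\ ker_op n LS (Pker x) /\ vadd (Pim x) (Pker x) = x.

Lemma iter_im x : vec n x -> exists w, vec n w /\ Nat.iter k (mat_vec n L0) x = mat_vec n LS w.
Proof.
intros hx. destruct (hproj x hx) as [[w [hw e]] [hk ex]].
exists (Nat.iter k (mat_vec n L0) w); split. apply iter_vec; auto.
rewrite <- ex, iter_add, e. rewrite (proj1 (ker_char _ (proj1 hk))) by apply hk.
rewrite iter_comm; auto. apply functional_extensionality; intro; unfold vadd, vzero; ring.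
apply com_L0_LS.
Qed.

Lemma im_char y : vec n y -> exists w, vec n w /\ mat_vec n LS y = Nat.iter k (mat_vec n L0) w.
Proof. apply MC.iter_surj. apply ker_char. apply iter_im. Qed.

Lemma im_ker_zero y : im_op n LS y -> ker_op n LS y -> y = vzero.
Proof.
intros [x [hx ->]] hk. destruct (hss _ ker_subspace ker_inv) as [V [hV [hVi [hd hc]]]].
destruct (hc x hx) as [u [v [hu [hv ->]]]].
assert (E : mat_vec n LS (vadd u v) = mat_vec n LS v).
{ rewrite mv_add. destruct hu as [_ hu]. rewrite hu. apply functional_extensionality; intro; unfold vadd, vzero; ring. }
rewrite E in *.
apply hd. exact hk. apply hVi; auto.
Qed.

Lemma im_vec y : im_op n LS y -> vec n y.
Proof. intros [x [_ ->]]; apply mv_vec. Qed.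

Lemma decomp_unique a b a' b' : im_op n LS a -> ker_op n LS b -> im_op n LS a' -> ker_op n LS b' ->
  vadd a b = vadd a' b' -> a = a' /\ b = b'.
Proof.
intros [x [hx ->]] hb [x' [hx' ->]] hb' e.
assert (Z : vsub (mat_vec n LS x) (mat_vec n LS x') = vzero).
{ apply im_ker_zero.
  - exists (vsub x x'); split. intros i hi; unfold vsub; rewrite hx, hx'; auto; ring. symmetry; apply mv_sub.
  - replace (vsub (mat_vec n LS x) (mat_vec n LS x')) with (vsub b' b).
    + destruct hb as [h1 h2], hb' as [h3 h4]. split. intros i hi; unfold vsub; rewrite h1, h3; auto; ring.
      rewrite mv_sub, h2, h4. apply functional_extensionality; intro; unfold vsub, vzero; ring.
    + apply functional_extensionality; intro i. apply (f_equal (fun f => f i)) in e. unfold vadd in e. unfold vsub. lra. }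
assert (E : mat_vec n LS x = mat_vec n LS x').
{ apply functional_extensionality; intro i. apply (f_equal (fun f => f i)) in Z. unfold vsub, vzero in Z. lra. }
split; auto. rewrite E in e. apply functional_extensionality; intro i. apply (f_equal (fun f => f i)) in e. unfold vadd in e. lra.
Qed.

Lemma Pker_comm B y : vec n y -> (forall x, ker_op n LS x -> ker_op n LS (mat_vec n B x)) ->
  (forall x, im_op n LS x -> im_op n LS (mat_vec n B x)) ->
  Pker (mat_vec n B y) = mat_vec n B (Pker y) /\ Pim (mat_vec n B y) = mat_vec n B (Pim y).
Proof.
intros hy hk hi. destruct (hproj y hy) as [h1 [h2 h3]].
destruct (hproj (mat_vec n B y) (mv_vec _ _ _)) as [h4 [h5 h6]].
destruct (decomp_unique (Pim (mat_vec n B y)) (Pker (mat_vec n B y)) (mat_vec n B (Pim y)) (mat_vec n B (Pker y))); auto.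
rewrite h6, <- mv_add, h3; auto.
Qed.

End LA.

Lemma vnorm_ge0 m x : 0 <= vnorm m x.
Proof. induction m; simpl. lra. eapply Rle_trans; [apply IHm|apply Rmax_l]. Qed.
Lemma coord_le m x i : (i < m)%nat -> Rabs (x i) <= vnorm m x.
Proof. induction m; intros h; [lia|]; simpl. destruct (Nat.eq_dec i m).
subst; apply Rmax_r. eapply Rle_trans; [apply IHm; lia|apply Rmax_l]. Qed.
Lemma vnorm_le m x b : 0 <= b -> (forall i, (i < m)%nat -> Rabs (x i) <= b) -> vnorm m x <= b.
Proof. induction m; intros hb h; simpl; auto. apply Rmax_lub; auto. Qed.

Lemma mvt_bound (h h' : R -> R) a b L e :
  (forall c, Rmin a b <= c <= Rmax a b -> derivable_pt_lim h c (h' c)) ->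
  (forall c, Rmin a b <= c <= Rmax a b -> Rabs (h' c - L) <= e) ->
  Rabs (h b - h a - L * (b - a)) <= e * Rabs (b - a).
Proof.
intros hd hb.
destruct (MVT_abs (h - mult_real_fct L id)%F (fun c => h' c - L) a b) as [c [e1 e2]].
{ intros c hc. apply derivable_pt_lim_minus. auto.
  replace L with (L * 1) at 2 by ring. apply derivable_pt_lim_scal, derivable_pt_lim_id. }
unfold minus_fct, mult_real_fct, id in e1.
replace (h b - h a - L * (b - a)) with (h b - L * b - (h a - L * a)) by ring.
rewrite e1. apply Rmult_le_compat_r. apply Rabs_pos. auto.
Qed.

Lemma rsum_abs_le m f g b : (forall k, (k < m)%nat -> Rabs (f k - g k) <= b k) ->
  Rabs (rsum m f - rsum m g) <= rsum m b.
Proof. induction m; intros H; simpl. rewrite Rminus_diag, Rabs_R0; lra.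
replace (rsum m f + f m - (rsum m g + g m)) with ((rsum m f - rsum m g) + (f m - g m)) by ring.
eapply Rle_trans; [apply Rabs_triang|]. apply Rplus_le_compat; auto. Qed.

Lemma rsum_ge0 m f : (forall k, (k < m)%nat -> 0 <= f k) -> 0 <= rsum m f.
Proof. induction m; intros H; simpl. lra. assert (0 <= f m) by auto. assert (0 <= rsum m f) by auto. lra. Qed.

Lemma common_delta m (P : nat -> R -> Prop) :
  (forall j d d', P j d -> 0 < d' <= d -> P j d') ->
  (forall j, (j < m)%nat -> exists d, 0 < d /\ P j d) ->
  exists d, 0 < d /\ forall j, (j < m)%nat -> P j d.
Proof. intros hm; induction m; intros H.
- exists 1; split; [lra| intros; lia].
- destruct IHm as [d1 [h1 h1']]. intros; apply H; lia.
  destruct (H m) as [d2 [h2 h2']]. lia.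
  exists (Rmin d1 d2); split. apply Rmin_pos; auto.
  intros j hj. destruct (Nat.eq_dec j m). subst. apply (hm _ d2); auto. split. apply Rmin_pos; auto. apply Rmin_r.
  apply (hm _ d1). apply h1'; lia. split. apply Rmin_pos; auto. apply Rmin_l.
Qed.

Lemma rsum_tele m (F : nat -> R) : rsum m (fun j => F (S j) - F j) = F m - F 0%nat.
Proof. induction m; simpl. ring. rewrite IHm; ring. Qed.

Lemma upd_upd x j s t : upd (upd x j s) j t = upd x j t.
Proof. apply functional_extensionality; intro i; unfold upd. destruct (Nat.eqb i j); auto. Qed.
Lemma upd_same x j t : upd x j t j = t.
Proof. unfold upd; rewrite Nat.eqb_refl; auto. Qed.
Lemma upd_vec m x j t : (j < m)%nat -> vec m x -> vec m (upd x j t).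
Proof. intros hj hx i hi; unfold upd. destruct (Nat.eqb_spec i j); [lia|auto]. Qed.

Lemma dir_deriv m (f : (nat -> R) -> R) (g : nat -> (nat -> R) -> R) z0 v c :
  vec m z0 -> vec m v ->
  (forall j, (j < m)%nat -> forall x, vec m x -> derivable_pt_lim (fun t => f (upd x j t)) (x j) (g j x)) ->
  (forall j, (j < m)%nat -> cont_on m (g j)) ->
  derivable_pt_lim (fun t => f (fun i => z0 i + (t - c) * v i)) c (rsum m (fun j => g j z0 * v j)).
Proof.
intros hz hv hd hc eps heps.
set (Sv := rsum m (fun j => Rabs (v j))).
assert (hS : 0 <= Sv) by (apply rsum_ge0; intros; apply Rabs_pos).
set (e1 := eps / (2 * (Sv + 1))).
assert (he1 : 0 < e1) by (unfold e1; apply Rdiv_lt_0_compat; lra).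
destruct (common_delta m (fun j d => forall y, vec m y -> vnorm m (vsub y z0) < d -> Rabs (g j y - g j z0) < e1))
  as [d [hd0 hdd]].
{ intros j d0 d' H [h1 h2] y hy hn. apply H; auto; lra. }
{ intros j hj. destruct (hc j hj z0 hz e1 he1) as [d [h1 h2]]. exists d; split; auto. }
set (V := vnorm m v). assert (hV : 0 <= V) by apply vnorm_ge0.
assert (hdp : 0 < d / (V + 1)) by (apply Rdiv_lt_0_compat; lra).
exists (mkposreal _ hdp). intros h hh0 hh. simpl in hh.
assert (hhV : Rabs h * V < d).
{ apply (Rmult_lt_compat_r (V+1)) in hh; [|lra]. unfold Rdiv in hh. rewrite Rmult_assoc, Rinv_l, Rmult_1_r in hh by lra.
  assert (0 <= Rabs h) by apply Rabs_pos. nra. }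
set (w := fun j i => if Nat.ltb i j then z0 i + h * v i else z0 i).
assert (E1 : (fun i => z0 i + (c + h - c) * v i) = w m).
{ apply functional_extensionality; intro i; unfold w. destruct (Nat.ltb_spec i m). f_equal; f_equal; ring.
  rewrite hv by lia. ring. }
assert (E0 : (fun i => z0 i + (c - c) * v i) = w 0%nat).
{ apply functional_extensionality; intro i; unfold w. simpl. ring. }
rewrite E1, E0.
assert (wS : forall j, w (S j) = upd (w j) j (z0 j + h * v j)).
{ intro j; apply functional_extensionality; intro i; unfold w, upd.
  destruct (Nat.eqb_spec i j) as [e|e]. rewrite e. destruct (Nat.ltb_spec j (S j)); [auto|lia].
  destruct (Nat.ltb_spec i (S j)); destruct (Nat.ltb_spec i j); auto; lia. }
assert (wvec : forall j, vec m (w j)).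
{ intros j i hi; unfold w. destruct (Nat.ltb i j); rewrite ?hz, ?hv by auto; ring. }
assert (Hterm : forall j, (j < m)%nat ->
  Rabs ((f (w (S j)) - f (w j)) - g j z0 * v j * h) <= e1 * (Rabs h * Rabs (v j))).
{ intros j hj. rewrite wS.
  assert (wjj : w j j = z0 j) by (unfold w; rewrite Nat.ltb_irrefl; auto).
  replace (f (w j)) with (f (upd (w j) j (z0 j))).
  2:{ f_equal. apply functional_extensionality; intro i; unfold upd. destruct (Nat.eqb_spec i j); subst; auto. }
  replace (g j z0 * v j * h) with (g j z0 * (z0 j + h * v j - z0 j)) by ring.
  replace (Rabs h * Rabs (v j)) with (Rabs (z0 j + h * v j - z0 j)) by (rewrite <- Rabs_mult; f_equal; ring).
  apply (mvt_bound (fun s => f (upd (w j) j s)) (fun s => g j (upd (w j) j s))).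
  - intros s hs. pose proof (hd j hj (upd (w j) j s) (upd_vec m _ _ _ hj (wvec j))) as H.
    rewrite upd_same in H. replace (fun t => f (upd (upd (w j) j s) j t)) with (fun t => f (upd (w j) j t)) in H by (apply functional_extensionality; intro; rewrite upd_upd; auto). exact H.
  - intros s hs. left. apply hdd; auto. apply upd_vec; auto.
    eapply Rle_lt_trans; [|exact hhV]. apply vnorm_le. assert (0 <= Rabs h) by apply Rabs_pos. nra.
    intros i hi. unfold vsub, upd, w. destruct (Nat.eqb_spec i j).
    + subst. assert (Rabs (s - z0 j) <= Rabs (h * v j)).
      { unfold Rmin, Rmax in hs. destruct (Rle_dec (z0 j) (z0 j + h * v j)) as [r|r];
        apply Rabs_le; split; try (unfold Rabs; destruct (Rcase_abs (h * v j)); lra). }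
      rewrite Rabs_mult in H. eapply Rle_trans; [exact H|]. apply Rmult_le_compat_l. apply Rabs_pos. apply coord_le; auto.
    + destruct (Nat.ltb i j). replace (z0 i + h * v i - z0 i) with (h * v i) by ring. rewrite Rabs_mult.
      apply Rmult_le_compat_l. apply Rabs_pos. apply coord_le; auto.
      rewrite Rminus_diag, Rabs_R0. assert (0 <= Rabs h) by apply Rabs_pos. nra. }
assert (Hsum : Rabs (f (w m) - f (w 0%nat) - rsum m (fun j => g j z0 * v j) * h) <= e1 * (Rabs h * Sv)).
{ rewrite <- (rsum_tele m (fun j => f (w j))).
  replace (rsum m (fun j => g j z0 * v j) * h) with (rsum m (fun j => g j z0 * v j * h)).
  2:{ rewrite Rmult_comm, <- rsum_scal. apply rsum_ext; intros; ring. }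
  replace (e1 * (Rabs h * Sv)) with (rsum m (fun j => e1 * (Rabs h * Rabs (v j)))).
  2:{ unfold Sv. rewrite rsum_scal, rsum_scal. auto. }
  apply rsum_abs_le. intros k hk. apply Hterm; auto. }
assert (hh1 : 0 < Rabs h) by (apply Rabs_pos_lt; auto).
replace ((f (w m) - f (w 0%nat)) / h - rsum m (fun j => g j z0 * v j))
  with ((f (w m) - f (w 0%nat) - rsum m (fun j => g j z0 * v j) * h) / h) by (field; auto).
unfold Rdiv. rewrite Rabs_mult, Rabs_inv.
apply (Rmult_lt_reg_r (Rabs h)); auto. rewrite Rmult_assoc, Rinv_l, Rmult_1_r by lra.
eapply Rle_lt_trans; [exact Hsum|]. unfold e1.
replace (eps / (2 * (Sv + 1)) * (Rabs h * Sv)) with (eps * Rabs h * (Sv / (2 * (Sv + 1)))) by (field; lra).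
assert (Sv / (2 * (Sv + 1)) < 1).
{ apply (Rmult_lt_reg_r (2 * (Sv+1))); [lra|]. unfold Rdiv. rewrite Rmult_assoc, Rinv_l by lra. lra. }
assert (0 < eps * Rabs h) by nra. nra.
Qed.

Lemma deriv_rsum m (F : nat -> R -> R) l x : (forall k, (k < m)%nat -> derivable_pt_lim (F k) x (l k)) ->
  derivable_pt_lim (fun t => rsum m (fun k => F k t)) x (rsum m l).
Proof. induction m; intros H; simpl.
- apply derivable_pt_lim_const.
- apply (derivable_pt_lim_plus (fun t => rsum m (fun k => F k t)) (F m)). apply IHm; auto. auto.
Qed.

Definition enc (n : nat) (X l : nat -> R) : nat -> R := fun k => if Nat.ltb k n then X k else l (k - n)%nat.
Lemma vtake_enc n X l : vec n X -> vtake n (enc n X l) = X.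
Proof. intros hX; apply functional_extensionality; intro k; unfold vtake, enc.
destruct (Nat.ltb_spec k n); auto. rewrite hX; auto. Qed.
Lemma vdrop_enc n X l : vdrop n (enc n X l) = l.
Proof. apply functional_extensionality; intro k; unfold vdrop, enc.
destruct (Nat.ltb_spec (n + k) n); [lia|]. f_equal; lia. Qed.
Lemma enc_vec n p X l : vec n X -> vec p l -> vec (n + p) (enc n X l).
Proof. intros hX hl k hk; unfold enc. destruct (Nat.ltb_spec k n); [lia|]. apply hl; lia. Qed.

Lemma smooth_partials m F : smooth m F -> exists g : nat -> (nat -> R) -> R,
  forall j, (j < m)%nat -> (forall x, vec m x -> derivable_pt_lim (fun t => F (upd x j t)) (x j) (g j x)) /\ cont_on m (g j).
Proof. intros hs. destruct (hs 1%nat) as [_ H].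
destruct (functional_choice (fun j g => (j < m)%nat -> (forall x, vec m x -> derivable_pt_lim (fun t => F (upd x j t)) (x j) (g x)) /\ cont_on m g)) as [g hg].
- intros j. destruct (Nat.ltb_spec j m).
  + destruct (H j H0) as [g [h1 h2]]. exists g; intros _; split; auto.
  + exists (fun _ => 0); intros; lia.
- exists g; auto.
Qed.

Section Comm.
Variables (n p : nat) (Gamma : (nat -> R) -> (nat -> R) -> (nat -> R)) (B L0 : nat -> nat -> R) (X0 lam0 : nat -> R).
Hypothesis hsm : forall i, (i < n)%nat -> smooth (n + p) (fun z => Gamma (vtake n z) (vdrop n z) i).
Hypothesis heq : forall X l, vec n X -> vec p l -> Gamma (mat_vec n B X) l = mat_vec n B (Gamma X l).
Hypothesis hX0 : vec n X0.
Hypothesis hl0 : vec p lam0.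
Hypothesis hfix : mat_vec n B X0 = X0.
Hypothesis hL0 : forall i j, (i < n)%nat -> (j < n)%nat ->
     derivable_pt_lim (fun t => Gamma (upd X0 j t) lam0 i) (X0 j) (L0 i j).

Lemma comm_entry i j : (i < n)%nat -> (j < n)%nat -> matmul n B L0 i j = matmul n L0 B i j.
Proof.
intros hi hj.
set (h := fun t => Gamma (mat_vec n B (upd X0 j t)) lam0 i).
assert (D1 : derivable_pt_lim h (X0 j) (matmul n B L0 i j)).
{ unfold h, matmul.
  replace (fun t => Gamma (mat_vec n B (upd X0 j t)) lam0 i) with (fun t => rsum n (fun k => B i k * Gamma (upd X0 j t) lam0 k)).
  apply deriv_rsum. intros k hk. apply (derivable_pt_lim_scal (fun t => Gamma (upd X0 j t) lam0 k)). auto.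
  apply functional_extensionality; intro t. rewrite heq; auto. unfold mat_vec. destruct (Nat.ltb_spec i n); [auto|lia].
  apply upd_vec; auto. }
set (z0 := enc n X0 lam0).
set (v := fun k => if Nat.ltb k n then B k j else 0).
destruct (smooth_partials _ _ (hsm i hi)) as [g hg].
assert (D2 : derivable_pt_lim h (X0 j) (rsum (n + p) (fun k => g k z0 * v k))).
{ replace h with (fun t => (fun z => Gamma (vtake n z) (vdrop n z) i) (fun k => z0 k + (t - X0 j) * v k)).
  apply (dir_deriv (n+p) (fun z => Gamma (vtake n z) (vdrop n z) i) g z0 v (X0 j)). apply enc_vec; auto.
  intros k hk; unfold v. destruct (Nat.ltb_spec k n); [lia|auto].
  intros; apply hg; auto. intros; apply hg; auto.
  apply functional_extensionality; intro t. unfold h.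
  assert (E : (fun k => z0 k + (t - X0 j) * v k) = enc n (mat_vec n B (upd X0 j t)) lam0).
  { apply functional_extensionality; intro k. unfold z0, v, enc. destruct (Nat.ltb_spec k n).
    - unfold mat_vec. destruct (Nat.ltb_spec k n); [|lia].
      rewrite rsum_upd by auto. assert (Hk : mat_vec n B X0 k = X0 k) by (rewrite hfix; auto). unfold mat_vec in Hk. replace (Nat.ltb k n) with true in Hk by (symmetry; apply Nat.ltb_lt; lia). rewrite Hk. ring.
    - ring. }
  rewrite E, vtake_enc, vdrop_enc; auto. apply mv_vec. }
rewrite (uniqueness_limite _ _ _ _ D1 D2).
rewrite (rsum_trunc (n + p) n); [|lia|intros k hk; unfold v; destruct (Nat.ltb_spec k n); [lia|ring]].
unfold matmul. apply rsum_ext; intros k hk. unfold v. destruct (Nat.ltb_spec k n); [|lia]. f_equal.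
destruct (hg k ltac:(lia)) as [hd _].
pose proof (hd z0 ltac:(apply enc_vec; auto)) as HH.
replace (fun t => Gamma (vtake n (upd z0 k t)) (vdrop n (upd z0 k t)) i) with (fun t => Gamma (upd X0 k t) lam0 i) in HH.
replace (z0 k) with (X0 k) in HH. exact (uniqueness_limite _ _ _ _ HH (hL0 i k hi hk)).
unfold z0, enc. destruct (Nat.ltb_spec k n); [auto|lia].
apply functional_extensionality; intro t.
assert (E : upd z0 k t = enc n (upd X0 k t) lam0).
{ apply functional_extensionality; intro q. unfold upd, z0, enc. destruct (Nat.eqb_spec q k); destruct (Nat.ltb_spec q n); auto; lia. }
rewrite E, vtake_enc, vdrop_enc; auto. apply upd_vec; auto.
Qed.

Lemma comm_B_L0 : commute n B L0.
Proof. intros x hx. rewrite !mv_mul. apply mv_ext. intros; apply comm_entry; auto. Qed.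
End Comm.

Lemma rsum_le m f g : (forall k, (k < m)%nat -> f k <= g k) -> rsum m f <= rsum m g.
Proof. induction m; intros H; simpl. lra. apply Rplus_le_compat; auto. Qed.
Lemma rsum_abs m f : Rabs (rsum m f) <= rsum m (fun k => Rabs (f k)).
Proof. pose proof (rsum_abs_le m f (fun _ => 0) (fun k => Rabs (f k))) as H.
rewrite (rsum_zero m (fun _ => 0)), Rminus_0_r in H by auto. apply H. intros; rewrite Rminus_0_r; lra. Qed.
Lemma rsum_term m f i : (i < m)%nat -> (forall k, (k < m)%nat -> 0 <= f k) -> f i <= rsum m f.
Proof. induction m; intros hi H; [lia|]; simpl. destruct (Nat.eq_dec i m).
subst. assert (0 <= rsum m f) by (apply rsum_ge0; auto). lra.
assert (f i <= rsum m f) by (apply IHm; auto; lia). assert (0 <= f m) by auto. lra. Qed.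

Lemma mv_bound n B : exists C, 1 <= C /\ forall x, vnorm n (mat_vec n B x) <= C * vnorm n x.
Proof.
set (T := rsum n (fun i => rsum n (fun k => Rabs (B i k)))).
assert (hT : 0 <= T) by (apply rsum_ge0; intros; apply rsum_ge0; intros; apply Rabs_pos).
exists (1 + T); split. lra. intros x.
assert (hx : 0 <= vnorm n x) by apply vnorm_ge0.
apply vnorm_le. nra. intros i hi. unfold mat_vec. destruct (Nat.ltb_spec i n); [|lia].
eapply Rle_trans; [apply rsum_abs|].
eapply Rle_trans. apply (rsum_le n _ (fun k => Rabs (B i k) * vnorm n x)).
intros k hk. rewrite Rabs_mult. apply Rmult_le_compat_l. apply Rabs_pos. apply coord_le; auto.
rewrite (rsum_ext n _ (fun k => vnorm n x * Rabs (B i k))) by (intros; ring). rewrite rsum_scal.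
assert (rsum n (fun k => Rabs (B i k)) <= T).
{ apply (rsum_term n (fun i => rsum n (fun k => Rabs (B i k)))); auto. intros; apply rsum_ge0; intros; apply Rabs_pos. }
nra.
Qed.

Theorem mainTheorem11 (n p : nat) (Sigma : Type) (mul : Sigma -> Sigma -> Sigma)
    (A : Sigma -> nat -> nat -> R)
    (Gamma : (nat -> R) -> (nat -> R) -> (nat -> R))
    (X0 lam0 : nat -> R) (L0 LS LN : nat -> nat -> R)
    (Pim Pker : (nat -> R) -> (nat -> R))
    (Xim : (nat -> R) -> (nat -> R) -> (nat -> R)) (d1 d2 : R) :
  (forall a b c, mul (mul a b) c = mul a (mul b c)) ->
  (forall s t x, vec n x ->
     mat_vec n (A s) (mat_vec n (A t) x) = mat_vec n (A (mul s t)) x) ->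
  (forall X l, vec n X -> vec p l -> vec n (Gamma X l)) ->
  (forall i, (i < n)%nat -> smooth (n + p) (fun z => Gamma (vtake n z) (vdrop n z) i)) ->
  (forall s X l, vec n X -> vec p l ->
     Gamma (mat_vec n (A s) X) l = mat_vec n (A s) (Gamma X l)) ->
  vec n X0 -> vec p lam0 -> Gamma X0 lam0 = vzero ->
  (forall s, mat_vec n (A s) X0 = X0) ->
  (forall i j, (i < n)%nat -> (j < n)%nat ->
     derivable_pt_lim (fun t => Gamma (upd X0 j t) lam0 i) (X0 j) (L0 i j)) ->
  (forall i j, (i < n)%nat -> (j < n)%nat -> L0 i j = LS i j + LN i j) ->
  semisimple n LS -> nilpotent n LN -> commute n LS LN ->
  (forall x, vec n x ->
     im_op n LS (Pim x) /\ ker_op n LS (Pker x) /\ vadd (Pim x) (Pker x) = x) ->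
  implicit_solution n p Gamma LS Pim Pker X0 lam0 Xim d1 d2 ->
  (forall s x, ker_op n LS x -> ker_op n LS (mat_vec n (A s) x)) /\
  (forall s x, im_op n LS x -> im_op n LS (mat_vec n (A s) x)) /\
  (forall s, exists eps, 0 < eps /\
     forall Xk l, ker_op n LS Xk -> vec p l ->
       vnorm n (vsub Xk (Pker X0)) < eps -> vnorm p (vsub l lam0) < eps ->
       reduced_map Gamma Pker Xim (mat_vec n (A s) Xk) l
       = mat_vec n (A s) (reduced_map Gamma Pker Xim Xk l)).
Proof.
intros hassoc hrep hG hsm heqv hX0 hl0 hG0 hfix hL0 hsum hss [k hnil] hcom hproj [hd1 [hd2 [himpl hcont]]].
assert (comm : forall s, commute n L0 (A s)).
{ intros s x hx. symmetry. apply (comm_B_L0 n p Gamma (A s) L0 X0 lam0); auto. }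
assert (KER : forall s x, ker_op n LS x -> ker_op n LS (mat_vec n (A s) x)).
{ intros s x [hx hk]. split. apply mv_vec.
  apply (proj2 (ker_char n L0 LS LN hsum hss hcom k hnil _ (mv_vec _ _ _))).
  rewrite iter_comm; auto. rewrite (proj1 (ker_char n L0 LS LN hsum hss hcom k hnil _ hx) hk). apply mv_zero. }
assert (IM : forall s x, im_op n LS x -> im_op n LS (mat_vec n (A s) x)).
{ intros s y [x [hx ->]].
  destruct (im_char n L0 LS LN hsum hss hcom k hnil Pim Pker hproj x hx) as [w [hw ->]].
  rewrite <- iter_comm; auto.
  destruct (iter_im n L0 LS LN hsum hss hcom k hnil Pim Pker hproj (mat_vec n (A s) w) (mv_vec _ _ _)) as [w' [hw' e]].
  exists w'; split; auto. }
split; [exact KER|split; [exact IM|]].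
intros s. set (B := A s).
destruct (mv_bound n B) as [C [hC hCb]].
assert (PC := fun y hy => Pker_comm n LS hss Pim Pker hproj B y hy (KER s) (IM s)).
destruct (hproj X0 hX0) as [hPi [hPk hPs]].
assert (Pzero : Pim vzero = vzero /\ Pker vzero = vzero).
{ destruct (hproj vzero (fun _ _ => eq_refl)) as [a [b c]].
  assert (im_op n LS vzero) by (exists vzero; split; [intros ? ?; auto| symmetry; apply mv_zero]).
  assert (ker_op n LS vzero) by (split; [intros ? ?; auto| apply mv_zero]).
  destruct (decomp_unique n LS hss _ _ vzero vzero a b); auto.
  rewrite c. apply functional_extensionality; intro; unfold vadd, vzero; ring. }
assert (vn0 : forall m x, vnorm m (vsub x x) = 0).
{ intros m x. apply Rle_antisym. apply vnorm_le. lra. intros; unfold vsub; rewrite Rminus_diag, Rabs_R0; lra. apply vnorm_ge0. }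
assert (X00 : Xim (Pker X0) lam0 = Pim X0).
{ destruct (himpl (Pker X0) lam0 hPk hl0) as [_ [_ [_ U]]]; rewrite ?vn0; auto.
  symmetry; apply U; auto. rewrite vn0; auto. rewrite hPs, hG0. apply Pzero. }
assert (hdC : 0 < d2 / C) by (apply Rdiv_lt_0_compat; lra).
destruct (hcont (Pker X0) lam0 hPk hl0) with (eps := d2 / C) as [delta [hdel hdelta]]; rewrite ?vn0; auto.
exists (Rmin (d1 / C) delta). split. apply Rmin_pos; auto. apply Rdiv_lt_0_compat; lra.
intros Xk l hXk hl e1 e2.
assert (d1C : d1 / C <= d1).
{ apply (Rmult_le_reg_r C); [lra|]. unfold Rdiv. rewrite Rmult_assoc, Rinv_l, Rmult_1_r by lra. nra. }
assert (e1' : vnorm n (vsub Xk (Pker X0)) < d1) by (eapply Rlt_le_trans; [exact e1|]; eapply Rle_trans; [apply Rmin_l|auto]).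
assert (e2' : vnorm p (vsub l lam0) < d1) by (eapply Rlt_le_trans; [exact e2|]; eapply Rle_trans; [apply Rmin_l|auto]).
assert (Cmul : forall x b, vnorm n x < b / C -> vnorm n (mat_vec n B x) < b).
{ intros x b hb. eapply Rle_lt_trans; [apply hCb|]. apply (Rmult_lt_compat_l C) in hb; [|lra].
  unfold Rdiv in hb. rewrite <- Rmult_assoc, (Rmult_comm C b), Rmult_assoc, Rinv_r, Rmult_1_r in hb by lra. exact hb. }
destruct (himpl Xk l hXk hl e1' e2') as [hI [hN [hZ _]]].
assert (hXkv : vec n Xk) by apply hXk.
assert (BPk : mat_vec n B (Pker X0) = Pker X0) by (rewrite <- (proj1 (PC X0 hX0)); unfold B; rewrite hfix; auto).
assert (BPi : mat_vec n B (Pim X0) = Pim X0) by (rewrite <- (proj2 (PC X0 hX0)); unfold B; rewrite hfix; auto).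
assert (e1B : vnorm n (vsub (mat_vec n B Xk) (Pker X0)) < d1).
{ rewrite <- BPk, <- mv_sub. apply Cmul. eapply Rlt_le_trans; [exact e1|apply Rmin_l]. }
assert (hBk := KER s Xk hXk).
destruct (himpl (mat_vec n B Xk) l hBk hl e1B e2') as [_ [_ [_ U]]].
assert (hv : vec n (vadd (Xim Xk l) Xk)).
{ intros i hi; unfold vadd; rewrite (im_vec n LS _ hI), hXkv; auto; ring. }
assert (EQ : Xim (mat_vec n B Xk) l = mat_vec n B (Xim Xk l)).
{ symmetry. apply U.
  - apply IM; auto.
  - rewrite <- BPi, <- mv_sub. apply Cmul. rewrite <- X00. apply hdelta; auto.
    eapply Rlt_le_trans; [exact e1|apply Rmin_r].
    eapply Rlt_le_trans; [exact e2|apply Rmin_r].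
  - rewrite <- mv_add. unfold B; rewrite heqv; auto. fold B. rewrite (proj2 (PC _ (hG _ _ hv hl))), hZ. apply mv_zero. }
unfold reduced_map. rewrite EQ, <- mv_add. unfold B; rewrite heqv; auto. fold B.
apply (proj1 (PC _ (hG _ _ hv hl))).
Qed.
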